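(* A finite nilpotent group is a $2$-closed group if and only if it is cyclic or it is isomorphic to a direct product $Q_{2^n}\times C_m$ of a generalized quaternion group $Q_{2^n}$ ($n\geq 3$) with a cyclic group $C_m$ of odd order $m$.
   Context: Permutations act on the right; $\alpha^g$ denotes the image of $\alpha$ under $g$. For a set $\Omega$ and $G\leq{\rm Sym}(\Omega)$, the $2$-closure of $G$ on $\Omega$ is $G^{(2),\Omega}=\{\theta\in{\rm Sym}(\Omega)\mid \forall \alpha,\beta\in\Omega\ \exists g\in G:\ \alpha^\theta=\alpha^g,\ \beta^\theta=\beta^g\}$. An abstract group $G$ is called a $2$-closed group if $H=H^{(2),\Omega}$ for every set $\Omega$ and every subgroup $H\leq{\rm Sym}(\Omega)$ with $H\cong G$. $Q_{2^n}$ denotes the generalized quaternion group of order $2^n$, $n\geq 3$, and $C_m$ the cyclic group of order $m$. *)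

(* Defs.v *)
From mathcomp Require Import all_boot all_fingroup all_solvable.
Set Implicit Arguments. Unset Strict Implicit. Unset Printing Implicit Defensive.
Local Open Scope group_scope.

(* A finite group G is 2-closed if for every set Omega and every subgroup
   H <= Sym(Omega) isomorphic to G we have H = H^(2).  Subgroups of Sym(Omega)
   isomorphic to G are exactly the images of faithful (right) actions of G on
   Omega; since H <= H^(2) always holds, H = H^(2) means every permutation
   theta of Omega satisfying the 2-closure condition lies in H. *)
Definition two_closed (gT : finGroupType) (G : {set gT}) : Prop :=
  forall (Omega : Type) (act : Omega -> gT -> Omega),
    (forall a, act a 1 = a) ->
    (forall a g h, g \in G -> h \in G -> act a (g * h) = act (act a g) h) ->
    {in G &, injective (fun g a => act a g)} ->
    forall theta : Omega -> Omega, bijective theta ->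
      (forall a b : Omega, exists2 g, g \in G & theta a = act a g /\ theta b = act b g) ->
      exists2 g, g \in G & forall a, theta a = act a g.

(* Main.v *)
Require Import Defs.
From mathcomp Require Import all_boot all_fingroup all_solvable.
From Stdlib Require Import ClassicalEpsilon FunctionalExtensionality.
Set Implicit Arguments. Unset Strict Implicit. Unset Printing Implicit Defensive.
Local Open Scope group_scope.

Section Construct.
Variables (gT : finGroupType) (G H1 H2 K : {group gT}) (t : gT).

Definition cS (i : nat) : {group gT} := if i == 0 then H1 else if (i == 1)%N then H2 else K.

Definition cact (a : nat * {set gT}) (g : gT) : nat * {set gT} :=
  (a.1, if (a.2 \in rcosets (cS a.1) G) && (g \in G) then a.2 :* g else a.2).

Lemma rcosets_closed (S : {group gT}) A g :
  A \in rcosets S G -> g \in G -> A :* g \in rcosets S G.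
Proof.
case/rcosetsP=> x xG -> gG; apply/rcosetsP; exists (x * g); first exact: groupM.
by rewrite rcosetM.
Qed.

Lemma cact1 a : cact a 1 = a.
Proof. by case: a => i A; rewrite /cact /= group1 andbT; case: ifP => // _; rewrite rcoset1. Qed.

Lemma cactM a g h : g \in G -> h \in G -> cact a (g * h) = cact (cact a g) h.
Proof.
case: a => i A gG hG; rewrite /cact /= groupM // gG hG !andbT.
case: ifP => AS /=; last by rewrite AS.
by rewrite rcosets_closed // rcosetM.
Qed.

Lemma cact_fix a g : a.2 \notin rcosets (cS a.1) G -> cact a g = a.
Proof. by case: a => i A /= /negbTE nA; rewrite /cact /= nA. Qed.

Lemma cact_in i w g : w \in G -> g \in G -> cact (i, cS i :* w) g = (i, cS i :* (w * g)).
Proof.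
move=> wG gG; rewrite /cact /= gG andbT rcosetM.
by have -> : cS i :* w \in rcosets (cS i) G by apply/rcosetsP; exists w.
Qed.

Hypotheses (sH1G : H1 \subset G) (sH2G : H2 \subset G) (sKG : K \subset G) (tG : t \in G).
Hypothesis pair1 : forall w v, w \in G -> v \in G ->
  exists2 g, g \in G & H1 :* (w * g) = H1 :* w /\ K :* (v * g) = K :* (v * t).
Hypothesis pair2 : forall w v, w \in G -> v \in G ->
  exists2 g, g \in G & H2 :* (w * g) = H2 :* w /\ K :* (v * g) = K :* (v * t).
Hypothesis noG : ~ (exists2 g, g \in G &
  [/\ forall w, w \in G -> H1 :* (w * g) = H1 :* w,
      forall w, w \in G -> H2 :* (w * g) = H2 :* w &
      forall v, v \in G -> K :* (v * g) = K :* (v * t)]).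
Hypothesis faith : forall g h, g \in G -> h \in G ->
  (forall w, w \in G -> H1 :* (w * g) = H1 :* (w * h)) ->
  (forall w, w \in G -> H2 :* (w * g) = H2 :* (w * h)) ->
  (forall w, w \in G -> K :* (w * g) = K :* (w * h)) -> g = h.

Definition ctau (i : nat) := if 2 <= i then t else 1.

Lemma ctauG i : ctau i \in G.
Proof. by rewrite /ctau; case: ifP. Qed.

Lemma pair_aux a b : (a.1 <= 1)%N -> 2 <= b.1 ->
  exists2 g, g \in G & cact a (ctau a.1) = cact a g /\ cact b (ctau b.1) = cact b g.
Proof.
case: a b => i A [j B] /= i1 j2; rewrite /ctau /= j2 (leqNgt 2 i) (leq_ltn_trans i1) //.
have [AS|nAS] := boolP (A \in rcosets (cS i) G); last first.
  by exists t => //; rewrite !(@cact_fix (i, A) _ nAS).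
have [BS|nBS] := boolP (B \in rcosets (cS j) G); last first.
  by exists 1 => //; rewrite !(@cact_fix (j, B) _ nBS).
case/rcosetsP: AS => w wG ->; case/rcosetsP: BS => v vG ->.
have Sj : cS j = K by rewrite /cS; case: j j2 => [|[|j]].
have [g gG [e1 e2]] : exists2 g, g \in G & cS i :* (w * g) = cS i :* w /\ K :* (v * g) = K :* (v * t).
  by rewrite /cS; case: i i1 => [|[|i]] // _; [apply: pair1 | apply: pair2].
exists g => //; rewrite !cact_in ?group1 // mulg1 e1; split=> //.
by rewrite Sj e2.
Qed.

Lemma not_two_closed : ~ two_closed G.
Proof.
move=> tc.
have inj : {in G &, injective (fun g a => cact a g)}.
  move=> g h gG hG E.
  have E' i w : w \in G -> cS i :* (w * g) = cS i :* (w * h).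
    by move=> wG; have := equal_f E (i, cS i :* w); rewrite !cact_in // => -[].
  by apply: faith => // w wG; [apply: (E' 0%N) | apply: (E' 1%N) | apply: (E' 2%N)].
pose th := fun a => cact a (ctau a.1).
have bij : bijective th.
  exists (fun a => cact a (ctau a.1)^-1) => a; rewrite /th.
    by rewrite -cactM ?groupV ?ctauG // mulgV cact1.
  rewrite -cactM ?groupV ?ctauG //; by [rewrite mulVg cact1 | case: a].
have prs : forall a b, exists2 g, g \in G & th a = cact a g /\ th b = cact b g.
  move=> a b; rewrite /th.
  have [a2|a1] := leqP 2 a.1; have [b2|b1] := leqP 2 b.1.
  + by exists t => //; rewrite /ctau a2 b2.
  + have [g gG [e1 e2]] := pair_aux (b1 : (b.1 <= 1)%N) a2.
    by exists g.
  + exact: pair_aux.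
  + by exists 1 => //; rewrite /ctau leqNgt (leq_ltn_trans (a1 : (a.1 <= 1)%N)) // leqNgt (leq_ltn_trans (b1 : (b.1 <= 1)%N)).
have [g gG E] := tc (nat * {set gT})%type cact cact1 (fun a g h gG hG => cactM a gG hG) inj th bij prs.
apply: noG; exists g => //.
have E' i w : w \in G -> cS i :* (w * ctau i) = cS i :* (w * g).
  by move=> wG; have := E (i, cS i :* w); rewrite /th !cact_in ?ctauG // => -[].
split=> w wG.
+ by have := E' 0%N w wG; rewrite /ctau /= mulg1.
+ by have := E' 1%N w wG; rewrite /ctau /= mulg1.
+ by have := E' 2%N w wG; rewrite /ctau /=.
Qed.

End Construct.


Section Cons1.
Variable gT : finGroupType.
Implicit Types G H N : {group gT}.

Lemma rcoset_core G H g h :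
  (forall w, w \in G -> H :* (w * g) = H :* (w * h)) -> g * h^-1 \in gcore H G.
Proof.
move=> E; apply/bigcapP=> x xG; rewrite mem_conjg.
have : x * g \in H :* (x * h) by rewrite -E // rcoset_refl.
by rewrite mem_rcoset invMg conjgE invgK !mulgA.
Qed.

Lemma norm_rcoset N z n : z \in 'N(N) -> n \in N -> N :* (z * n) = N :* z.
Proof.
move=> zN nN; apply/rcoset_eqP; rewrite mem_rcoset.
have : n ^ z^-1 \in N by rewrite memJ_norm ?groupV.
by rewrite conjgE invgK mulgA.
Qed.

Lemma corefree_not2c G H :
  nilpotent G -> H \subset G -> H :!=: 1 -> gcore H G = 1 -> ~ two_closed G.
Proof.
move=> nilG sHG ntH coreH.
pose M := (<<class_support H G>>)%G.
have sMG : M \subset G by rewrite gen_subG class_support_subG.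
have nMG : G \subset 'N(M) := subset_trans (class_support_norm H G) (norm_gen (class_support H G)).
have sHM : H \subset M by apply: subset_trans (sub_class_support G H) (subset_gen _).
pose N := [~: M, G]%G.
have nNG : G \subset 'N(N) := commg_normr G M.
have sNM : N \subset M by rewrite commg_subl nMG.
have ntM : M :!=: 1.
  apply: contra ntH => /eqP M1; rewrite -subG1 -M1 sHM //.
have prN : N \proper M by apply: (@nil_comm_properl _ G M G) => //; rewrite subsetI subxx.
have nsHN : ~~ (H \subset N).
  apply/negP => sHN; move: prN; rewrite properE => /andP[_ /negP]; apply.
  by rewrite gen_subG class_support_sub_norm.
have [t Ht tN] := subsetPn nsHN.
have tG : t \in G := subsetP sHG t Ht.
have pr : forall w v, w \in G -> v \in G ->
  exists2 g, g \in G & H :* (w * g) = H :* w /\ N :* (v * g) = N :* (v * t).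
  move=> w v wG vG; exists (t ^ w); first by rewrite groupJ.
  split; first by rewrite -conjgC rcosetM rcoset_id.
  rewrite conjg_mulR mulgA (@norm_rcoset N (v * t) [~ t, w]) //.
    by rewrite (subsetP nNG) // groupM.
  by rewrite mem_commg // (subsetP sHM).
apply: (@not_two_closed _ G H H N t) => //.
- case=> g gG [E1 _ E3].
  have : g * 1^-1 \in gcore H G by apply: rcoset_core => w wG; rewrite mulg1 E1.
  rewrite coreH invg1 mulg1 => /set1P g1.
  have := E3 1 (group1 _); rewrite g1 !mul1g rcoset1 => Nt.
  by case/negP: tN; rewrite Nt rcoset_refl.
- move=> g h gG hG E1 _ _.
  have := rcoset_core E1; rewrite coreH => /set1P /eqP.
  by rewrite -eq_mulgV1 => /eqP.
Qed.

End Cons1.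


Section Cons2.
Variable gT : finGroupType.
Implicit Types G H N : {group gT}.

Lemma cycle_prime_TI (x y z : gT) p : prime p -> #[x] = p -> #[y] = p ->
  <[x]> != <[y]> -> z \in <[x]> -> z \in <[y]> -> z = 1.
Proof.
move=> pp ox oy nxy zx zy.
have TI : <[x]> :&: <[y]> = 1.
  apply: prime_TIg; first by rewrite [#|_|]ox.
  apply: contra nxy => sxy; rewrite eqEcard sxy /=.
  by rewrite -[#|<[y]>|]/#[y] -[#|<[x]>|]/#[x] ox oy.
have : z \in <[x]> :&: <[y]> by rewrite inE zx zy.
by rewrite TI => /set1P.
Qed.

Lemma rcoset_eq1 H g : H :* g = H :* 1 -> g \in H.
Proof. by move=> E; rewrite -[H : {set _}]rcoset1 -E rcoset_refl. Qed.

Lemma central_not2c G (x y : gT) p : prime p -> x \in 'Z(G) -> y \in 'Z(G) ->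
  #[x] = p -> #[y] = p -> <[x]> != <[y]> -> ~ two_closed G.
Proof.
move=> pp /centerP[xG cx] /centerP[yG cy] ox oy nxy.
have cxv v : v \in G -> commute v x by move=> vG; apply/commute_sym/cx.
have cyv v : v \in G -> commute v y by move=> vG; apply/commute_sym/cy.
apply: (@not_two_closed _ G <[x]>%G <[y]>%G <[x * y]>%G x) => //.
- move=> w v wG vG; exists x => //; split=> //.
  by rewrite (cxv w wG) rcosetM rcoset_id ?cycle_id.
- move=> w v wG vG; exists y^-1; first by rewrite groupV.
  split.
    have cw : commute w y^-1 by apply: commuteV; apply: cyv.
    by rewrite cw rcosetM rcoset_id // groupV cycle_id.
  have cvy : commute v y^-1 by apply: commuteV; apply: cyv.
  rewrite cvy (cxv v vG) !rcosetM; congr (_ :* v).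
  apply/rcoset_eqP; rewrite mem_rcoset -invMg groupV.
  have -> : x * y = y * x by exact: (esym (cy x xG)).
  by rewrite cycle_id.
- case=> g gG [E1 E2 E3].
  have g1 : g = 1.
    apply: (cycle_prime_TI pp ox oy nxy).
      by apply: rcoset_eq1; rewrite -{1}(mul1g g) E1.
    by apply: rcoset_eq1; rewrite -{1}(mul1g g) E2.
  have := E3 1 (group1 _); rewrite g1 !mul1g => /esym Kx.
  have xK : x \in <[x * y]> by apply: rcoset_eq1.
  have yK : y \in <[x * y]>.
    by have := groupM (groupVr xK) (cycle_id (x * y)); rewrite mulKg.
  have oxy : #[x * y] %| p.
    rewrite order_dvdn expgMn; last exact: (esym (cy x xG)).
    by rewrite -{1}ox expg_order -oy expg_order mulg1.
  have sK : forall z, #[z] = p -> z \in <[x * y]> -> <[z]> = <[x * y]>.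
    move=> z oz zK; apply/eqP; rewrite eqEcard cycle_subG zK /=.
    by rewrite -[#|<[z]>|]/#[z] oz dvdn_leq ?prime_gt0.
  by case/eqP: nxy; rewrite (sK x) ?(sK y).
- move=> g h gG hG E1 E2 _; apply/eqP; rewrite eq_mulgV1; apply/eqP.
  apply: (cycle_prime_TI pp ox oy nxy).
    by rewrite -mem_rcoset; have := E1 1 (group1 _); rewrite !mul1g => <-; apply: rcoset_refl.
  by rewrite -mem_rcoset; have := E2 1 (group1 _); rewrite !mul1g => <-; apply: rcoset_refl.
Qed.

End Cons2.


Section Helly.
Variable gT : finGroupType.
Implicit Types G H : {group gT}.

Lemma constt_in G (p : nat_pred) x : x \in G -> x.`_p \in G.
Proof. by move=> xG; case/cycleP: (cycle_constt p x) => i ->; apply: groupX. Qed.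

Lemma nil_consttM G (p : nat_pred) x y : nilpotent G -> x \in G -> y \in G ->
  (x * y).`_p = x.`_p * y.`_p.
Proof.
move=> nilG xG yG.
have [_ _ cPR _] := dprodP (nilpotent_pcoreC p nilG).
have hP := nilpotent_pcore_Hall p nilG.
have hR := nilpotent_pcore_Hall p^' nilG.
have memP z : z \in G -> (z \in 'O_p(G)) = p.-elt z.
  by move=> zG; apply: mem_normal_Hall hP (pcore_normal _ _) zG.
have memR z : z \in G -> (z \in 'O_p^'(G)) = p^'.-elt z.
  by move=> zG; apply: mem_normal_Hall hR (pcore_normal _ _) zG.
have cm a b : a \in 'O_p(G) -> b \in 'O_p^'(G) -> commute b a.
  by move=> aP bR; apply: (centP (subsetP cPR b bR)).
set xp := x.`_p; set xq := x.`_p^'; set yp := y.`_p; set yq := y.`_p^'.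
have xpP : xp \in 'O_p(G) by rewrite memP ?constt_in ?p_elt_constt.
have ypP : yp \in 'O_p(G) by rewrite memP ?constt_in ?p_elt_constt.
have xqR : xq \in 'O_p^'(G) by rewrite memR ?constt_in ?p_elt_constt.
have yqR : yq \in 'O_p^'(G) by rewrite memR ?constt_in ?p_elt_constt.
have -> : x * y = (xp * yp) * (xq * yq).
  rewrite -{1}(consttC p x) -{1}(consttC p y) -/xp -/xq -/yp -/yq.
  by rewrite -!mulgA; congr (_ * _); rewrite !mulgA (cm yp xq).
have abP : xp * yp \in 'O_p(G) by rewrite groupM.
have abR : xq * yq \in 'O_p^'(G) by rewrite groupM.
rewrite consttM; last by apply/esym/cm.
rewrite constt_p_elt; last by rewrite -memP // (subsetP (pcore_sub p G)).
have e : (xq * yq).`_p = 1 by apply/constt1P; rewrite -memR // (subsetP (pcore_sub p^' G)).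
by rewrite e mulg1.
Qed.

Lemma nil_consttV G (p : nat_pred) x y : nilpotent G -> x \in G -> y \in G ->
  (x * y^-1).`_p = x.`_p * (y.`_p)^-1.
Proof. by move=> nilG xG yG; rewrite (nil_consttM p nilG) ?groupV // consttV. Qed.

Lemma nil_constt_prod G (p : nat_pred) (I : Type) (r : seq I) (P : pred I) (F : I -> gT) :
  nilpotent G -> (forall i, F i \in G) ->
  (\prod_(i <- r | P i) F i).`_p = \prod_(i <- r | P i) (F i).`_p.
Proof.
move=> nilG FG.
suff [] : (\prod_(i <- r | P i) F i) \in G /\
          (\prod_(i <- r | P i) F i).`_p = \prod_(i <- r | P i) (F i).`_p by [].
elim/big_rec2: _ => [|i x y Pi [xG <-]]; first by rewrite group1 constt1.
by rewrite groupM // (nil_consttM p nilG).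
Qed.

Definition Uprop G := forall x y, x \in G -> y \in G -> prime #[x] -> #[x] = #[y] ->
  <[x]> = <[y]>.

Lemma U_two_closed G : nilpotent G -> Uprop G -> two_closed G.
Proof.
move=> nilG UG Omega act act1 actM inj theta _ prs.
case: (classic (exists a : Omega, True)) => [[a0 _]|noO]; last first.
  by exists 1 => // a; case: noO; exists a.
have stabX a k n : k \in G -> act a k = a -> act a (k ^+ n) = a.
  move=> kG ak; elim: n => [|n IH]; first by rewrite expg0 act1.
  by rewrite expgS actM ?groupX // ak.
have stabC a k (p : nat_pred) : k \in G -> act a k = a -> act a k.`_p = a.
  by move=> kG ak; case/cycleP: (cycle_constt p k) => i ->; apply: stabX.
pose Good (p : nat) a := forall k, k \in G -> act a k = a -> k.`_p = 1.
have exGood : forall p : nat, exists a, Good p a.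
  move=> p; apply: NNPP => nG.
  have bad : forall a, exists v, [/\ v \in G, act a v = a, prime p & #[v] = p].
    move=> a; apply: NNPP => nv; apply: nG; exists a => k kG ak.
    apply: NNPP => ku; apply: nv.
    have pu : p.-elt k.`_p := p_elt_constt p k.
    have ntu : <[k.`_p]> != 1 by rewrite cycle_eq1; apply/eqP.
    have [pp pdv _] := pgroup_pdiv pu ntu.
    have [v vu ov] := Cauchy pp pdv.
    have vk : v \in <[k]> by apply: (subsetP _ v vu); rewrite cycle_subG cycle_constt.
    case/cycleP: vk => i vi.
    exists v; split=> //; first by rewrite vi groupX.
    by rewrite vi stabX.
  have [v0 [v0G _ pp ov0]] := bad a0.
  have fix0 : forall a, act a v0 = a.
    move=> a; have [v [vG av _ ov]] := bad a.
    have : v0 \in <[v]>.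
      by rewrite -(UG v0 v v0G vG) ?cycle_id ?ov0 ?ov.
    by case/cycleP=> i ->; apply: stabX.
  have : v0 = 1.
    apply: inj => //; apply: functional_extensionality => a.
    by rewrite fix0 act1.
  by move=> v01; move: pp; rewrite -ov0 v01 order1.
pose ap p := proj1_sig (constructive_indefinite_description _ (exGood p)).
have apG p : Good p (ap p) := proj2_sig (constructive_indefinite_description _ (exGood p)).
have exg p : exists g, g \in G /\ theta (ap p) = act (ap p) g.
  by have [g gG [e _]] := prs (ap p) (ap p); exists g.
pose gp p := proj1_sig (constructive_indefinite_description _ (exg p)).
have gpG p : gp p \in G /\ theta (ap p) = act (ap p) (gp p) :=
  proj2_sig (constructive_indefinite_description _ (exg p)).
pose g := \prod_(i < #|G|.+1) (gp i).`_i.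
have gG : g \in G by apply: group_prod => i _; apply: constt_in; case: (gpG i).
have gq : forall q, q < #|G|.+1 -> g.`_q = (gp q).`_q.
  move=> q qlt; rewrite /g (@nil_constt_prod G q _ _ _ _ nilG); last first.
    by move=> i; apply: constt_in; case: (gpG i).
  rewrite (big_only1 (Ordinal qlt)) //=.
    by rewrite constt_p_elt // p_elt_constt.
  move=> i niq _; apply/constt1P; apply: sub_p_elt (p_elt_constt _ _).
  move=> r; rewrite !inE => /eqP ->; apply: contra niq => /eqP iq.
  by apply/eqP/val_inj.
have hq : forall p h, h \in G -> act (ap p) h = theta (ap p) -> h.`_p = (gp p).`_p.
  move=> p h hG ah; have [gpG' ea] := gpG p.
  have k1 : (h * (gp p)^-1).`_p = 1.
    apply: (apG p) => //; first by rewrite groupM ?groupV.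
    by rewrite actM ?groupV // ah ea -actM ?groupV // mulgV act1.
  by move: k1; rewrite (nil_consttV p nilG) // => /eqP; rewrite -eq_mulgV1 => /eqP.
exists g => // b.
have [h0 h0G [_ e0]] := prs b b.
pose k := g * h0^-1.
have kG : k \in G by rewrite groupM ?groupV.
suff bk : act b k = b.
  have -> : g = k * h0 by rewrite /k mulgKV.
  by rewrite e0 actM // bk.
suff [] : k \in G /\ act b k = b by [].
rewrite -(prod_constt k) big_nat_cond.
apply: (big_ind (fun x => x \in G /\ act b x = b)); first by rewrite group1 act1.
  by move=> x y [xG ax] [yG ay]; rewrite groupM // actM // ax ay.
move=> p /andP[/andP[_ plt] _].
have pG : p < #|G|.+1.
  by rewrite (leq_trans plt) // ltnS dvdn_leq ?cardG_gt0 ?order_dvdG.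
split; first exact: constt_in.
have [h hG [eh eb]] := prs (ap p) b.
have hb : act b (h * h0^-1) = b.
  by rewrite actM ?groupV // -eb e0 -actM ?groupV // mulgV act1.
have -> : k.`_p = (h * h0^-1).`_p.
  by rewrite /k !(nil_consttV p nilG) // gq // -(hq p h hG (esym eh)).
by apply: stabC; rewrite ?groupM ?groupV.
Qed.

End Helly.


Section Final.
Variable gT : finGroupType.
Implicit Types G H : {group gT}.

Lemma twoc_U G : nilpotent G -> two_closed G -> Uprop G.
Proof.
move=> nilG tc.
have central z : z \in G -> prime #[z] -> z \in 'Z(G).
  move=> zG pz; pose X := <[z]>%G.
  have sXG : X \subset G by rewrite cycle_subG.
  have ntX : X :!=: 1.
    rewrite cycle_eq1; apply: contraTneq pz => ->; by rewrite order1.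
  have pX : prime #|X| by [].
  have sXC : X \subset gcore X G.
    apply/negPn/negP => nXC.
    have c1 : gcore X G = 1.
      have := prime_TIg pX nXC; by rewrite (setIidPr (gcore_sub X G)).
    exact: (corefree_not2c nilG sXG ntX c1 tc).
  have nXG : G \subset 'N(X).
    have -> : (X : {set gT}) = gcore X G.
      by apply/eqP; rewrite eqEsubset sXC gcore_sub.
    exact: gcore_norm.
  have nsX : X <| G by rewrite /normal sXG nXG.
  have := meet_center_nil nilG nsX ntX.
  have [//|nXZ] := boolP (X \subset 'Z(G)); first by rewrite -cycle_subG.
  by rewrite (prime_TIg pX nXZ) eqxx.
move=> x y xG yG px exy.
have py : prime #[y] by rewrite -exy.
case: (eqVneq <[x]> <[y]>) => // nxy.
by case: (central_not2c px (central x xG px) (central y yG py) erefl (esym exy) nxy tc).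
Qed.

Lemma ohm_card G (P : {group gT}) (p : nat) : Uprop G -> P \subset G -> p.-group P -> P :!=: 1 ->
  #|'Ohm_1(P)| = p.
Proof.
move=> UG sPG pP ntP.
have [pp pdv _] := pgroup_pdiv pP ntP.
have [z zP oz] := Cauchy pp pdv.
suff -> : 'Ohm_1(P) = <[z]> by [].
rewrite Ohm1Eprime; apply/eqP; rewrite eqEsubset; apply/andP; split.
  rewrite gen_subG; apply/subsetP => u; rewrite inE => /andP[uP pu].
  have ou : #[u] = p.
    have := mem_p_elt pP uP; rewrite /p_elt (pnatE _ pu) => /eqP.
    by [].
  have e : <[u]> = <[z]> by apply: UG; rewrite ?(subsetP sPG) // ou oz.
  by rewrite /= -e cycle_id.
by rewrite cycle_subG mem_gen // inE zP oz pp.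
Qed.

Lemma U_struct G : nilpotent G -> Uprop G ->
  cyclic G \/ exists (n : nat) (Q C : {group gT}),
     [/\ 3 <= n, Q \x C = G, Q \isog 'Q_(2 ^ n), cyclic C & odd #|C|].
Proof.
move=> nilG UG.
pose Q := 'O_2(G)%G; pose C := 'O_2^'(G)%G.
have dQC : Q \x C = G := nilpotent_pcoreC 2 nilG.
have sCG : C \subset G := pcore_sub _ _.
have sQG : Q \subset G := pcore_sub _ _.
have pQ : 2.-group Q := pcore_pgroup _ _.
have pC : 2^'.-group C := pcore_pgroup _ _.
have oddC : odd #|C| by rewrite odd_2'nat.
have cycC : cyclic C.
  apply: nil_Zgroup_cyclic; last exact: nilpotentS sCG nilG.
  apply/forall_inP => V /SylowP[p pp sylV].
  have sVC := pHall_sub sylV; have pV := pHall_pgroup sylV.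
  have [V1|ntV] := eqVneq (V : {set gT}) 1; first by rewrite V1 cyclic1.
  have := introT (prime_Ohm1P pV ntV) (ohm_card UG (subset_trans sVC sCG) pV ntV).
  case/orP => // /andP[/eqP p2 _]; subst p.
  by case/negP: ntV; rewrite trivg_card1 (pnat_1 pV (pgroupS sVC pC)).
have [cycQ|ncycQ] := boolP (cyclic Q).
  by left; rewrite (cyclic_dprod dQC cycQ cycC) (pnat_coprime pQ pC).
have ntQ : Q :!=: 1 by apply: contraNneq ncycQ => ->; apply: cyclic1.
have := introT (prime_Ohm1P pQ ntQ) (ohm_card UG sQG pQ ntQ).
rewrite (negPf ncycQ) /= => /eqP/quaternion_classP [n n2 isoQ].
by right; exists n, Q, C.
Qed.

Lemma struct_U G :
  (cyclic G \/ exists (n : nat) (Q C : {group gT}),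
     [/\ 3 <= n, Q \x C = G, Q \isog 'Q_(2 ^ n), cyclic C & odd #|C|]) -> Uprop G.
Proof.
case=> [cycG | [n [Q [C [n3 dQC isoQ cycC oddC]]]]] x y xG yG px exy.
  apply/eqP; rewrite (eq_subG_cyclic cycG) ?cycle_subG //.
  by apply/eqP.
have [nsQ nsC] := dprod_normal2 dQC.
have cardG := dprod_card dQC.
have sQG := normal_sub nsQ; have sCG := normal_sub nsC.
have oQ : #|Q| = (2 ^ n)%N by rewrite (card_isog isoQ) card_quaternion.
have pQ : 2.-group Q by rewrite /pgroup oQ pnatX pnat_id.
have pC : 2^'.-group C by rewrite /pgroup -odd_2'nat.
have hQ : 2.-Hall(G) Q.
  rewrite /pHall sQG pQ -(divgS sQG) -cardG mulKn ?cardG_gt0 //.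
have hC : 2^'.-Hall(G) C.
  rewrite /pHall sCG pC -(divgS sCG) -cardG mulnK ?cardG_gt0 // pnatNK //.
have [x2|xn2] := eqVneq #[x] 2.
  have inQ u : u \in G -> #[u] = 2 -> u \in Q.
    move=> uG ou; rewrite (mem_normal_Hall hQ nsQ uG) /p_elt ou pnat_id //.
  have ntQ : Q :!=: 1.
    by rewrite trivg_card1 oQ -[1%N](expn0 2) eqn_exp2l // -lt0n (ltn_trans _ n3).
  have o1 : #|'Ohm_1(Q)| = 2.
    apply: (elimT (prime_Ohm1P pQ ntQ)); apply/orP; right; rewrite eqxx /=.
    by apply/eqP/quaternion_classP; exists n.
  have eO u : u \in G -> #[u] = 2 -> <[u]> = 'Ohm_1(Q).
    move=> uG ou; apply/eqP; rewrite eqEcard [#|<[u]>|]ou o1 leqnn andbT.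
    by rewrite Ohm1Eprime cycle_subG mem_gen // inE inQ // ou.
  by rewrite !eO // -exy.
have inC u : u \in G -> prime #[u] -> #[u] != 2 -> u \in C.
  move=> uG pu nu; rewrite (mem_normal_Hall hC nsC uG) /p_elt (pnatE _ pu).
  by rewrite !inE.
apply/eqP; rewrite (eq_subG_cyclic cycC) ?cycle_subG ?inC // -?exy //.
  by apply/eqP.
Qed.

End Final.

Theorem theorem2 (gT : finGroupType) (G : {group gT}) :
  nilpotent G ->
  (two_closed G <->
   cyclic G \/
   exists (n : nat) (Q C : {group gT}),
     [/\ 3 <= n, Q \x C = G, Q \isog 'Q_(2 ^ n), cyclic C & odd #|C|]).
Proof.
move=> nilG; split=> [tc | st].
  exact: U_struct nilG (twoc_U nilG tc).
exact: U_two_closed nilG (struct_U st).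
Qed.
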